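(* Let $N$ be a positive-integer-valued random variable with probability generating function $Q$ (so $Q$ is a continuous strictly increasing bijection of $[0,1]$ onto itself, with inverse $Q^{-1}$). (i) If $Q$ satisfies $$1-Q(1-s)=Q^{-1}(s)\quad\text{for all }0<s<1,$$ then for every continuous d.f. $F$ on $\mathbb{R}$, every $a\in\mathbb{R}$ and $b>0$: $Q[F(x)]=F(a+bx)$ for all $x$ holds if and only if $Q[\bar F(a+bx)]=\bar F(x)$ for all $x$. That is, $N$-max stability of $F$ is equivalent to $N$-min stability of $F$ (with the same constants). (ii) Conversely, if there is a continuous d.f. $F$ on $\mathbb{R}$ with $\{F(x):x\in\mathbb{R}\}\supseteq(0,1)$ and constants $a\in\mathbb{R}$, $b>0$ such that both $Q[F(x)]=F(a+bx)$ and $Q[\bar F(a+bx)]=\bar F(x)$ hold for all $x\in\mathbb{R}$, then $1-Q(1-s)=Q^{-1}(s)$ for all $0<s<1$.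
   Context: For a continuous d.f. $F$ on $\mathbb{R}$ and a positive-integer-valued random variable $N$ with PGF $Q$, $F$ is called $N$-max stable if $Q[F(x)]=F(a+bx)$ for all $x\in\mathbb{R}$ and some $a\in\mathbb{R}$, $b>0$, and $N$-min stable if $Q[\bar F(a+bx)]=\bar F(x)$ for all $x\in\mathbb{R}$ and some $a\in\mathbb{R}$, $b>0$, where $\bar F=1-F$. *)

(* Defs.v *)
From Stdlib Require Import Reals ClassicalEpsilon.
From Coquelicot Require Import Coquelicot.
Open Scope R_scope.

(* p k = P(N = k): distribution of a positive-integer-valued random variable N. *)
Definition pos_int_distribution (p : nat -> R) : Prop :=
  p O = 0 /\ (forall k, 0 <= p k) /\ is_series p 1.

Definition pgf (p : nat -> R) (s : R) : R := Series (fun k => p k * s ^ k).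

(* Inverse of a map of [0,1] onto itself: the t in [0,1] with Q t = s
   (chosen by Hilbert's epsilon; well defined when Q is a bijection of [0,1]). *)
Definition inv01 (Q : R -> R) (s : R) : R :=
  epsilon (inhabits 0) (fun t => 0 <= t <= 1 /\ Q t = s).

Definition continuous_df (F : R -> R) : Prop :=
  (forall x y, x <= y -> F x <= F y) /\
  (forall x, continuity_pt F x) /\
  is_lim F m_infty 0 /\ is_lim F p_infty 1.

Definition Fbar (F : R -> R) (x : R) : R := 1 - F x.

(* Main.v *)
Require Import Defs.
From Stdlib Require Import Reals Lra ClassicalEpsilon Classical.
From Coquelicot Require Import Coquelicot.
Open Scope R_scope.

Lemma Series_zero : Series (fun _ : nat => 0) = 0.
Proof.
  rewrite (Series_ext _ (fun n => 0 * (fun _ : nat => 0) n)) by (intros; ring).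
  rewrite Series_scal_l; ring.
Qed.

Lemma Series_ge0 (d : nat -> R) : (forall n, 0 <= d n) -> ex_series d -> 0 <= Series d.
Proof.
  intros H E. rewrite <- Series_zero. apply Series_le; auto. intros; split; [lra|auto].
Qed.

Lemma Series_ge_term (d : nat -> R) k : (forall n, 0 <= d n) -> ex_series d -> d k <= Series d.
Proof.
  intros H E. rewrite (Series_incr_n d (S k)) by (auto with arith).
  simpl Init.Nat.pred.
  assert (0 <= Series (fun j => d (S k + j)%nat)).
  { apply Series_ge0; auto. apply ex_series_incr_n; auto. }
  destruct k; simpl in *.
  - lra.
  - pose proof (cond_pos_sum d k H). lra.
Qed.

Lemma pow_le1 s n : 0 <= s <= 1 -> s ^ n <= 1.
Proof. intros H. rewrite <- (pow1 n). apply pow_incr. lra. Qed.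

Section Q.
Variable p : nat -> R.
Hypothesis Hp : pos_int_distribution p.

Lemma exs_p : ex_series p.
Proof. destruct Hp as (_&_&H). exists 1; auto. Qed.

Lemma exs_Q s : 0 <= s <= 1 -> ex_series (fun k => p k * s ^ k).
Proof.
  intros Hs. apply (@ex_series_le R_AbsRing R_CompleteNormedModule _ p); [|apply exs_p].
  intros n. destruct Hp as (_&Hn&_). change norm with Rabs.
  rewrite Rabs_mult, (Rabs_right (p n)) by (apply Rle_ge, Hn).
  rewrite <- RPow_abs, (Rabs_right s) by lra.
  rewrite <- (Rmult_1_r (p n)) at 2. apply Rmult_le_compat_l; auto.
  apply pow_le1. lra.
Qed.

Lemma Q_range s : 0 <= s <= 1 -> 0 <= pgf p s <= 1.
Proof.
  intros Hs. destruct Hp as (_&Hn&Hs1). unfold pgf. split.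
  - apply Series_ge0; [|apply exs_Q; auto]. intros; apply Rmult_le_pos; auto. apply pow_le; lra.
  - rewrite <- (is_series_unique _ _ Hs1). apply Series_le; [|apply exs_p].
    intros n; split. apply Rmult_le_pos; auto. apply pow_le; lra.
    rewrite <- (Rmult_1_r (p n)) at 2. apply Rmult_le_compat_l; auto.
    apply pow_le1. lra.
Qed.

Lemma Q0 : pgf p 0 = 0.
Proof.
  unfold pgf. rewrite (Series_ext _ (fun _ => 0)). apply Series_zero.
  intros [|n]; simpl. destruct Hp as (H0&_). rewrite H0; ring. ring.
Qed.

Lemma Q1 : pgf p 1 = 1.
Proof.
  unfold pgf. rewrite (Series_ext _ p). destruct Hp as (_&_&H). apply is_series_unique; auto.
  intros; rewrite pow1; ring.
Qed.

Lemma pow_strict s t n : 0 <= s < t -> s ^ S n < t ^ S n.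
Proof.
  intros H. induction n. simpl; lra.
  change (s * s ^ S n < t * t ^ S n).
  assert (0 <= s ^ S n) by (apply pow_le; lra).
  apply Rle_lt_trans with (s * t ^ S n). apply Rmult_le_compat_l; lra.
  apply Rmult_lt_compat_r; [apply pow_lt|]; lra.
Qed.

Lemma Q_strict s t : 0 <= s -> s < t -> t <= 1 -> pgf p s < pgf p t.
Proof.
  intros H1 H2 H3.
  destruct Hp as (H0&Hn&Hs1).
  assert (exists k, p k <> 0).
  { apply not_all_not_ex. intros Hall.
    assert (Series p = 0). { rewrite (Series_ext _ (fun _ => 0)). apply Series_zero. intros n; apply NNPP; auto. }
    rewrite (is_series_unique _ _ Hs1) in H. lra. }
  destruct H as [k Hk].
  destruct k as [|k]; [contradiction|].
  set (d := fun n => p n * t ^ n - p n * s ^ n).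
  assert (Ed : is_series d (pgf p t - pgf p s)).
  { apply (is_series_minus (fun n => p n * t ^ n) (fun n => p n * s ^ n));
    apply Series_correct, exs_Q; lra. }
  assert (Hd : forall n, 0 <= d n).
  { intros n; unfold d. rewrite <- Rmult_minus_distr_l. apply Rmult_le_pos; auto.
    pose proof (pow_incr s t n). lra. }
  pose proof (Series_ge_term d (S k) Hd (ex_intro _ _ Ed)).
  rewrite (is_series_unique _ _ Ed) in H.
  assert (0 < d (S k)).
  { unfold d. rewrite <- Rmult_minus_distr_l. apply Rmult_lt_0_compat.
    pose proof (Hn (S k)). lra. pose proof (pow_strict s t k). lra. }
  lra.
Qed.

Lemma Q_inj s t : 0 <= s <= 1 -> 0 <= t <= 1 -> pgf p s = pgf p t -> s = t.
Proof.
  intros Hs Ht E. destruct (Rtotal_order s t) as [H|[H|H]]; auto.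
  pose proof (Q_strict s t); lra. pose proof (Q_strict t s); lra.
Qed.

Lemma inv01_eq s t : 0 <= t <= 1 -> pgf p t = s -> inv01 (pgf p) s = t.
Proof.
  intros Ht E. unfold inv01.
  destruct (epsilon_spec (inhabits 0) (fun t => 0 <= t <= 1 /\ pgf p t = s)) as [H1 H2].
  exists t; auto.
  apply Q_inj; auto. congruence.
Qed.
End Q.

Lemma F_range F x : continuous_df F -> 0 <= F x <= 1.
Proof.
  intros (Hm&_&Hl0&Hl1). split.
  - assert (Rbar_le 0 (F x)).
    { apply (is_lim_le_loc F (fun _ => F x) m_infty); auto. exists x; intros; apply Hm; lra.
      apply is_lim_const. }
    simpl in H; auto.
  - assert (Rbar_le (F x) 1).
    { apply (is_lim_le_loc (fun _ => F x) F p_infty); auto. exists x; intros; apply Hm; lra.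
      apply is_lim_const. }
    simpl in H; auto.
Qed.

Theorem theorem2p2 (p : nat -> R) (Hp : pos_int_distribution p) :
  ( (forall s, 0 < s < 1 -> 1 - pgf p (1 - s) = inv01 (pgf p) s) ->
    forall (F : R -> R) (a b : R), continuous_df F -> 0 < b ->
      ((forall x, pgf p (F x) = F (a + b * x)) <->
       (forall x, pgf p (Fbar F (a + b * x)) = Fbar F x)) )
  /\
  ( (exists (F : R -> R) (a b : R),
       continuous_df F /\
       (forall y, 0 < y < 1 -> exists x, F x = y) /\
       0 < b /\
       (forall x, pgf p (F x) = F (a + b * x)) /\
       (forall x, pgf p (Fbar F (a + b * x)) = Fbar F x)) ->
    forall s, 0 < s < 1 -> 1 - pgf p (1 - s) = inv01 (pgf p) s ).
Proof.
  pose proof (Q0 p Hp) as HQ0. pose proof (Q1 p Hp) as HQ1.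
  split.
  - intros Hinv F a b HF Hb. unfold Fbar. split.
    + intros Hf x. rewrite <- Hf.
      pose proof (F_range F x HF) as Hu.
      destruct (Req_dec (F x) 0) as [E|E]. rewrite E, HQ0, Rminus_0_r, HQ1; ring.
      destruct (Req_dec (F x) 1) as [E'|E']. rewrite E', HQ1, Rminus_eq_0, HQ0; ring.
      pose proof (Q_strict p Hp 0 (F x)) as A1. pose proof (Q_strict p Hp (F x) 1) as A2.
      assert (Hm : 0 < pgf p (F x) < 1) by (split; [rewrite <- HQ0; apply A1| rewrite <- HQ1; apply A2]; lra).
      pose proof (Hinv _ Hm) as Hi. rewrite (inv01_eq p Hp (pgf p (F x)) (F x)) in Hi; auto. lra.
    + intros Hg x. pose proof (Hg x) as Hx.
      pose proof (F_range F (a + b * x) HF) as Hv.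
      pose proof (F_range F x HF) as Ht.
      set (v := F (a + b * x)) in *. set (t := F x) in *.
      destruct (Req_dec v 0) as [E|E].
      { rewrite E, Rminus_0_r, HQ1 in Hx. replace t with 0 by lra. rewrite HQ0; auto. }
      destruct (Req_dec v 1) as [E'|E'].
      { rewrite E', Rminus_eq_0, HQ0 in Hx. replace t with 1 by lra. rewrite HQ1; auto. }
      destruct (Req_dec t 0) as [T|T].
      { rewrite T, Rminus_0_r, <- HQ1 in Hx. apply (Q_inj p Hp) in Hx; lra. }
      destruct (Req_dec t 1) as [T'|T'].
      { rewrite T', Rminus_eq_0, <- HQ0 in Hx. apply (Q_inj p Hp) in Hx; lra. }
      assert (Hm : 0 < 1 - t < 1) by lra.
      pose proof (Hinv _ Hm) as Hi.
      rewrite (inv01_eq p Hp (1 - t) (1 - v)) in Hi by (auto; lra).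
      replace (1 - (1 - t)) with t in Hi by ring. lra.
  - intros (F & a & b & HF & Hs & Hb & Hf & Hg) s Hs01.
    destruct (Hs (1 - s)) as [x Hx]. lra.
    pose proof (Hg x) as G. unfold Fbar in G. rewrite <- Hf, Hx in G.
    replace (1 - (1 - s)) with s in G by ring.
    pose proof (Q_range p Hp (1 - s)) as R1.
    symmetry. apply (inv01_eq p Hp); auto. lra.
Qed.
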